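(* Let $n \ge k \ge 2$ be integers, $\alpha > 1$, $c > 0$, and let $\mathcal{F}$ be a family of $k$-uniform hypergraphs. Suppose $\mathcal{G}_n$ is an $(\mathcal{F},n,0,c)$-universal family of $k$-uniform hypergraphs on $n$ vertices such that $$c < \frac{\lambda_\alpha(\mathcal{G}_n)^{\alpha/(\alpha-1)}}{k!\,\mathrm{ex}(n,\mathcal{F})}.$$ If $H$ is a $k$-uniform $\mathcal{F}$-free hypergraph on $n$ vertices, then $\lambda_\alpha(H) \le \lambda_\alpha(\mathcal{G}_n)$. Furthermore, if $\lambda_\alpha(H) > (c\,k!\,\mathrm{ex}(n,\mathcal{F}))^{(\alpha-1)/\alpha}$ then $H \subseteq G$ for some $G \in \mathcal{G}_n$.
   Context: A $k$-uniform hypergraph is $\mathcal{F}$-free if it has no (not necessarily induced) subgraph isomorphic to a member of $\mathcal{F}$. $\mathrm{ex}(n,\mathcal{F})$ is the maximum number of edges of an $\mathcal{F}$-free $k$-uniform hypergraph on $n$ vertices. A family $\mathcal{G}$ of $\mathcal{F}$-free $k$-uniform hypergraphs is $(\mathcal{F},n,0,c)$-universal if every $\mathcal{F}$-free $k$-uniform hypergraph $H$ on $n$ vertices with $e(H) > c\,\mathrm{ex}(n,\mathcal{F})$ satisfies $H \subseteq G$ for some $G \in \mathcal{G}$. For a $k$-uniform hypergraph $H$ on $[n]$, $\tau_H(x,\dots,x) = k!\sum_{\{i_1,\dots,i_k\}\in E(H)} x_{i_1}\cdots x_{i_k}$ and $\lambda_\alpha(H) = \max_{\|x\|_\alpha=1}\tau_H(x,\dots,x)$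 with $\|x\|_\alpha = (\sum_i|x_i|^\alpha)^{1/\alpha}$; $\lambda_\alpha(\mathcal{G}) = \sup\{\lambda_\alpha(G) : G\in\mathcal{G}\}$. *)

(* Defs.v *)
From HB Require Import structures.
From mathcomp Require Import all_boot all_order all_algebra.
From mathcomp Require Import boolp classical_sets reals exp.
Set Implicit Arguments. Unset Strict Implicit. Unset Printing Implicit Defensive.
Import Order.TTheory GRing.Theory Num.Theory.
Local Open Scope ring_scope.

Record hg := Hg { hg_n : nat; hg_edges : {set {set 'I_hg_n}} }.

Definition uniform (m k : nat) (E : {set {set 'I_m}}) : Prop :=
  forall e, e \in E -> #|e| = k.

Definition contains (n : nat) (E : {set {set 'I_n}}) (F : hg) : Prop :=
  exists f : 'I_(hg_n F) -> 'I_n, injective f /\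
    forall e, e \in hg_edges F -> f @: e \in E.

Definition Ffree (Fam : hg -> Prop) (n : nat) (E : {set {set 'I_n}}) : Prop :=
  forall F, Fam F -> ~ contains E F.

(* H ⊆ G : H is (isomorphic to) a subgraph of G, both on [n] *)
Definition subhg (n : nat) (H G : {set {set 'I_n}}) : Prop :=
  exists f : 'I_n -> 'I_n, injective f /\ forall e, e \in H -> f @: e \in G.

Definition ex (Fam : hg -> Prop) (k n : nat) : nat :=
  \max_(E : {set {set 'I_n}} | `[< uniform k E /\ Ffree Fam E >]) #|E|.

(* tau_H(x,...,x) = k! * sum_{e in E} prod_{i in e} x_i *)
Definition tau {R : realType} (k n : nat) (E : {set {set 'I_n}}) (x : 'I_n -> R) : R :=
  (k`!)%:R * \sum_(e in E) \prod_(i in e) x i.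

Definition anorm {R : realType} (n : nat) (a : R) (x : 'I_n -> R) : R :=
  (\sum_(i < n) `|x i| `^ a) `^ (a^-1).

Definition lam {R : realType} (k n : nat) (a : R) (E : {set {set 'I_n}}) : R :=
  sup [set tau k E x | x in [set x : 'I_n -> R | anorm a x = 1]].

Definition lamfam {R : realType} (k n : nat) (a : R) (G : set {set {set 'I_n}}) : R :=
  sup [set lam k a E | E in G].

Definition universal {R : realType} (Fam : hg -> Prop) (k n : nat) (c : R)
    (G : set {set {set 'I_n}}) : Prop :=
  (forall E, G E -> uniform k E /\ Ffree Fam E) /\
  (forall H : {set {set 'I_n}}, uniform k H -> Ffree Fam H ->
     (#|H|%:R > c * (ex Fam k n)%:R) -> exists2 E, G E & subhg H E).

(* Main.v *)
Require Import Defs.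
From HB Require Import structures.
From mathcomp Require Import all_boot all_order all_algebra.
From mathcomp Require Import boolp classical_sets reals exp.
From mathcomp Require Import ring lra zify.
Import Order.TTheory GRing.Theory Num.Theory.
Local Open Scope ring_scope.

Section S.
Variable R : realType.

Lemma bern (a t : R) : 1 < a -> 0 <= t -> a * t - (a - 1) <= t `^ a.
Proof.
move=> a1 t0.
have a0 : 0 < a by lra.
have q0 : 0 < a / (a - 1) by apply: divr_gt0; lra.
have := @conjugate_powR R t 1 a (a / (a - 1)) t0 ler01 a0 q0.
rewrite powR1 invf_div.
have -> : a^-1 + (a - 1) / a = 1.
  by field; rewrite gt_eqF.
move=> /(_ erefl); rewrite mulr1 => h.
have h2 : t `^ a / a + 1 * ((a - 1) / a) = (t `^ a + (a - 1)) / a.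
  by field; rewrite gt_eqF.
rewrite h2 ler_pdivlMr // in h. lra.
Qed.

Lemma pmean (T : finType) (A : {set T}) (z : T -> R) (a : R) : 1 < a ->
  (forall e, 0 <= z e) ->
  #|A|%:R * ((\sum_(e in A) z e) / #|A|%:R) `^ a <= \sum_(e in A) z e `^ a.
Proof.
move=> a1 z0.
have s0 : 0 <= \sum_(e in A) z e `^ a by apply: sumr_ge0 => e _; exact: powR_ge0.
have [m0|mpos] := eqVneq #|A| 0%N.
  by rewrite m0 mul0r.
have mp : 0 < #|A|%:R :> R by rewrite ltr0n lt0n.
set mu := (\sum_(e in A) z e) / #|A|%:R.
have mu0 : 0 <= mu by rewrite divr_ge0 ?sumr_ge0 // ltW.
have [->|mun] := eqVneq mu 0.
  by rewrite powR0 ?mulr0 // gt_eqF //; lra.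
have mup : 0 < mu by rewrite lt_neqAle eq_sym mun.
have key : forall e, (a * (z e / mu) - (a - 1)) * mu `^ a <= z e `^ a.
  move=> e.
  have -> : z e `^ a = (z e / mu) `^ a * mu `^ a.
    rewrite -powRM ?divfK ?gt_eqF //.
    by rewrite divr_ge0 // ltW.
  rewrite (ler_pM2r (powR_gt0 _ mup)); apply: bern => //.
  by rewrite divr_ge0 // ltW.
apply: le_trans (ler_sum _ (fun e _ => key e)).
rewrite -mulr_suml big_split /= sumrN -mulr_sumr -mulr_suml sumr_const.
rewrite ler_pM2r ?powR_gt0 //.
have sn : \sum_(i in A) z i != 0.
  by apply: contra mun => /eqP h; rewrite /mu h mul0r.
have -> : (\sum_(i in A) z i) / mu = #|A|%:R.
  by rewrite /mu; field; rewrite sn gt_eqF.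
rewrite -[_ *+ _]mulr_natr. lra.
Qed.

Lemma prodD1 (n : nat) (e : {set 'I_n}) (y : 'I_n -> R) i : i \in e ->
  \prod_(j in e) y j = y i * \prod_(j in e :\ i) y j.
Proof.
move=> ie; rewrite (bigD1 i) //=; congr (_ * _).
by apply: eq_bigl => j; rewrite in_setD1 andbC.
Qed.

Lemma esym (n k : nat) (E : {set {set 'I_n}}) (y : 'I_n -> R) :
  (forall i, 0 <= y i) -> uniform k E ->
  (k`!)%:R * \sum_(e in E) \prod_(i in e) y i <= (\sum_i y i) ^+ k.
Proof.
move=> y0; elim: k E => [|k IH] E uE.
  have h : forall e, e \in E -> e = finset.set0.
    by move=> e /uE /eqP; rewrite cards_eq0 => /eqP.
  rewrite expr0 fact0 mul1r (eq_bigr (fun _ => 1)); last first.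
    by move=> e /h ->; rewrite big_set0.
  rewrite sumr_const -[1 *+ _]mulr_natr mul1r lern1.
  have : E \subset pred1 (finset.set0 : {set 'I_n}).
    by apply/fintype.subsetP => e /h ->; rewrite inE.
  by move/subset_leq_card; rewrite card1.
set S := \sum_i y i.
have step : forall e, e \in E ->
    (k.+1)%:R * \prod_(i in e) y i = \sum_(i in e) y i * \prod_(j in e :\ i) y j.
  move=> e eE; rewrite [RHS](eq_bigr (fun _ => \prod_(i in e) y i)); last first.
    by move=> i ie; rewrite (@prodD1 _ e y i ie).
  by rewrite sumr_const uE // mulr_natl.
rewrite factS mulnC natrM -mulrA mulr_sumr (eq_bigr _ step).
rewrite (eq_bigr (fun e : {set 'I_n} => \sum_i (if i \in e then y i * \prod_(j in e :\ i) y j else 0)));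
  last by move=> e _; rewrite big_mkcond.
rewrite exchange_big /= mulr_sumr exprS mulr_suml.
apply: ler_sum => i _.
rewrite -big_mkcondr /=.
set Ei := [set e :\ i | e in [set e in E | i \in e]].
have -> : \sum_(e in E | i \in e) y i * \prod_(j in e :\ i) y j =
          y i * \sum_(e' in Ei) \prod_(j in e') y j.
  rewrite big_imset /=; last first.
    move=> e1 e2; rewrite !inE => /andP[_ i1] /andP[_ i2] h.
    by rewrite -(finset.setD1K i1) -(finset.setD1K i2) h.
  rewrite mulr_sumr; apply: eq_bigl => e; by rewrite inE.
have uEi : uniform k Ei.
  move=> e' /imsetP[e]; rewrite inE => /andP[eE ie] ->.
  by have := cardsD1 i e; rewrite ie (uE e eE) add1n => -[->].
rewrite mulrCA ler_wpM2l //.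
exact: IH.
Qed.

Lemma prod_powR (I : finType) (P : pred I) (f : I -> R) r :
  (forall i, 0 <= f i) ->
  (\prod_(i | P i) f i) `^ r = \prod_(i | P i) f i `^ r.
Proof.
move=> f0.
suff [] : 0 <= \prod_(i | P i) f i /\
   (\prod_(i | P i) f i) `^ r = \prod_(i | P i) f i `^ r by [].
apply: (big_ind2 (fun u v => 0 <= u /\ u `^ r = v)).
- by rewrite powR1.
- move=> u1 v1 u2 v2 [h1 e1] [h2 e2]; split; first exact: mulr_ge0.
  by rewrite powRM // e1 e2.
- by move=> i _; split.
Qed.

Lemma sum_norm1 (n : nat) (a : R) (x : 'I_n -> R) : 1 < a ->
  anorm a x = 1 -> \sum_i `|x i| `^ a = 1.
Proof.
move=> a1; rewrite /anorm => /eqP; rewrite powR_eq1 => /or3P[/eqP //| | ].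
- by rewrite ltNge sumr_ge0 // => i _; exact: powR_ge0.
- by rewrite invr_eq0 gt_eqF //; lra.
Qed.

Lemma tau_bound (n k : nat) (a : R) (E : {set {set 'I_n}}) (x : 'I_n -> R) :
  1 < a -> uniform k E -> anorm a x = 1 ->
  tau k E x <= ((k`!)%:R * #|E|%:R) `^ ((a - 1) / a).
Proof.
move=> a1 uE nx.
have S1 := @sum_norm1 n a x a1 nx.
set K : R := (k`!)%:R.
have K0 : 0 < K by rewrite ltr0n fact_gt0.
set z := fun e : {set 'I_n} => \prod_(i in e) `|x i|.
have z0 : forall e, 0 <= z e by move=> e; apply: prodr_ge0 => i _.
set T := \sum_(e in E) z e.
have S2 : tau k E x <= K * T.
  rewrite /tau -/K; apply: ler_wpM2l; first exact: ltW.
  apply: ler_sum => e _.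
  by rewrite /z -normr_prod ler_norm.
apply: le_trans S2 _.
have S3 : K * \sum_(e in E) z e `^ a <= 1.
  rewrite (eq_bigr (fun e : {set 'I_n} => \prod_(i in e) `|x i| `^ a)); last first.
    by move=> e _; rewrite /z prod_powR.
  have := @esym n k E (fun i => `|x i| `^ a) (fun i => powR_ge0 _ _) uE.
  by rewrite S1 expr1n.
have S4 := @pmean _ E z a a1 z0.
have T0 : 0 <= T by apply: sumr_ge0.
have [->|Tn] := eqVneq T 0; first by rewrite mulr0 powR_ge0.
have Tp : 0 < T by rewrite lt_neqAle eq_sym Tn.
have mpos : (0 < #|E|)%N.
  case: (posnP #|E|) => // /card0_eq h; move: Tn.
  by rewrite /T big_pred0 ?eqxx // => e; rewrite h.
set m : R := #|E|%:R.
have mp : 0 < m by rewrite ltr0n.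
have a0 : 0 < a by lra.
have Km0 : 0 <= K * m by rewrite mulr_ge0 // ltW.
have key : (K * T) `^ a <= (K * m) `^ (a - 1).
  have -> : K * T = (K * m) * (T / m) by field; rewrite gt_eqF.
  rewrite powRM ?divr_ge0 ?(ltW mp) //.
  have -> : (K * m) `^ a * (T / m) `^ a =
            (K * m) `^ (a - 1) * (K * (m * (T / m) `^ a)).
    by rewrite -(mulr_powRB1 Km0 a0); ring.
  apply: le_trans (_ : (K * m) `^ (a - 1) * 1 <= _); last by rewrite mulr1.
  rewrite ler_wpM2l ?powR_ge0 //.
  apply: le_trans S3; rewrite ler_wpM2l ?(ltW K0) //.
have e1 : K * T = ((K * T) `^ a) `^ (a^-1).
  by rewrite -powRrM mulfV ?gt_eqF // powRr1 // mulr_ge0 // ltW.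
rewrite e1 powRrM; apply: ge0_ler_powR => //.
- by rewrite invr_ge0 ltW.
- by rewrite nnegrE powR_ge0.
- by rewrite nnegrE powR_ge0.
Qed.

Lemma sub_sum (T : finType) (A B : {set T}) (F : T -> R) :
  A \subset B -> (forall t, 0 <= F t) ->
  \sum_(t in A) F t <= \sum_(t in B) F t.
Proof.
move=> /fintype.subsetP AB F0; rewrite big_mkcond [X in _ <= X]big_mkcond.
apply: ler_sum => t _; case: ifP => tA; first by rewrite (AB _ tA).
by case: ifP.
Qed.

Lemma unit_vec (n : nat) (a : R) : (0 < n)%N -> 1 < a ->
  exists x : 'I_n -> R, anorm a x = 1 /\
    forall k (E : {set {set 'I_n}}), (2 <= k)%N -> uniform k E -> tau k E x = 0.
Proof.
move=> n0 a1; pose i0 : 'I_n := Ordinal n0.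
exists (fun i => if i == i0 then 1 else 0); split.
  rewrite /anorm (bigD1 i0) //= ?eqxx normr1 powR1 big1 ?addr0 ?powR1 //.
  move=> j /negbTE ->; rewrite normr0 powR0 //; rewrite gt_eqF //; lra.
move=> k E k2 uE; rewrite /tau big1 ?mulr0 // => e eE.
have : (0 < #|e :\ i0|)%N.
  have := cardsD1 i0 e; rewrite (uE e eE); move: k2; case: (i0 \in e) => /= k2 h; rewrite h in k2; first by rewrite add1n ltnS in k2. by rewrite add0n in k2; apply: ltnW.
rewrite card_gt0 => /set0Pn [j]; rewrite in_setD1 => /andP[ji je].
by rewrite (@prodD1 _ e _ j je) (negbTE ji) mul0r.
Qed.

Local Open Scope classical_set_scope.
Lemma lam_facts (n k : nat) (a : R) (E : {set {set 'I_n}}) :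
  (2 <= k)%N -> (k <= n)%N -> 1 < a -> uniform k E ->
  [/\ has_sup [set tau k E x | x in [set x : 'I_n -> R | anorm a x = 1]],
      lam k a E <= ((k`!)%:R * #|E|%:R) `^ ((a - 1) / a),
      0 <= lam k a E &
      forall x, anorm a x = 1 -> tau k E x <= lam k a E].
Proof.
move=> k2 kn a1 uE.
have [x0 [nx0 tx0]] := @unit_vec n a (leq_trans (leq_trans (isT : (0 < 2)%N) k2) kn) a1.
have ne : [set tau k E x | x in [set x : 'I_n -> R | anorm a x = 1]] !=set0.
  by exists (tau k E x0); exists x0.
have ub : ubound [set tau k E x | x in [set x : 'I_n -> R | anorm a x = 1]]
               (((k`!)%:R * #|E|%:R) `^ ((a - 1) / a)).
  by move=> r [x nx <-]; exact: tau_bound.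
have hs : has_sup [set tau k E x | x in [set x : 'I_n -> R | anorm a x = 1]].
  by split => //; eexists; exact: ub.
have ge : forall x, anorm a x = 1 -> tau k E x <= lam k a E.
  by move=> x nx; apply: sup_upper_bound => //; exists x.
split => //; first exact: ge_sup.
by rewrite -(tx0 k E k2 uE); exact: ge.
Qed.

Lemma lam_mono (n k : nat) (a : R) (H G : {set {set 'I_n}}) :
  (2 <= k)%N -> (k <= n)%N -> 1 < a -> uniform k H -> uniform k G ->
  subhg H G -> lam k a H <= lam k a G.
Proof.
move=> k2 kn a1 uH uG [f [finj fHG]].
have [hsH _ _ _] := @lam_facts n k a H k2 kn a1 uH.
have [_ _ _ geG] := @lam_facts n k a G k2 kn a1 uG.
apply: ge_sup; first by case: hsH.
move=> r [x nx <-].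
pose g := invF finj.
have ginj : injective g by apply: (can_inj (f_invF finj)).
pose x' := fun j => `|x (g j)|.
have nx' : anorm a x' = 1.
  rewrite -nx /anorm /x'; congr (_ `^ _).
  rewrite [RHS](reindex_inj ginj) /=; apply: eq_bigr => j _.
  by rewrite normr_id.
apply: le_trans (geG _ nx').
rewrite /tau ler_wpM2l ?ler0n //.
have x'0 : forall j, 0 <= x' j by move=> j; exact: normr_ge0.
apply: le_trans (_ : \sum_(e in H) \prod_(j in f @: e) x' j <= _).
  apply: ler_sum => e _; rewrite big_imset /=; last by move=> i1 i2 _ _; apply: finj.
  rewrite [X in _ <= X](eq_bigr (fun i => `|x i|)); last first.
    by move=> i _; rewrite /x' /g invF_f.
  by rewrite -normr_prod ler_norm.
rewrite -(big_imset (h := fun e : {set 'I_n} => f @: e) (A := mem H)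
  (fun e' : {set 'I_n} => \prod_(j in e') x' j)) /=; last first.
  by move=> e1 e2 _ _; apply: imset_inj.
apply: sub_sum; last by move=> t; apply: prodr_ge0 => j _.
by apply/fintype.subsetP => e' /imsetP [e eH ->]; exact: fHG.
Qed.
End S.

Theorem theorem4 (R : realType) (n k : nat) (a c : R) (Fam : hg -> Prop)
    (Gn : set {set {set 'I_n}}) :
  (2 <= k)%N -> (k <= n)%N -> 1 < a -> 0 < c ->
  (forall F, Fam F -> uniform k (hg_edges F)) ->
  universal Fam k c Gn ->
  c < lamfam k a Gn `^ (a / (a - 1)) / ((k`!)%:R * (ex Fam k n)%:R) ->
  forall H : {set {set 'I_n}}, uniform k H -> Ffree Fam H ->
    lam k a H <= lamfam k a Gn /\
    ((c * (k`!)%:R * (ex Fam k n)%:R) `^ ((a - 1) / a) < lam k a H ->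
       exists2 G, Gn G & subhg H G).
Proof.
move=> k2 kn a1 c0 _ [univ1 univ2] hc H uH fH.
set K : R := (k`!)%:R.
set X : R := (ex Fam k n)%:R.
set L := lamfam k a Gn.
have a0 : 0 < a by lra.
have K0 : 0 < K by rewrite ltr0n fact_gt0.
have p0 : 0 < (a - 1) / a by rewrite divr_gt0 //; lra.
pose B := (K * #|{set 'I_n}|%:R) `^ ((a - 1) / a).
have lamB : forall E, Gn E -> lam k a E <= B.
  move=> E GE; have uE := (univ1 E GE).1.
  have [_ h _ _] := @lam_facts R n k a E k2 kn a1 uE.
  apply: le_trans h _; apply: ge0_ler_powR.
  - exact: ltW.
  - by rewrite nnegrE mulr_ge0.
  - by rewrite nnegrE mulr_ge0.
  - apply: ler_wpM2l; first exact: ltW. by rewrite ler_nat; exact: max_card.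
have lamG : forall E, Gn E -> lam k a E <= L.
  move=> E GE; apply: ub_le_sup; last by exists E.
  by exists B => r [E' GE' <-]; exact: lamB.
have L0 : 0 <= L.
  have [[E GE]|G0] := pselect (exists E, Gn E).
    have [_ _ h _] := @lam_facts R n k a E k2 kn a1 (univ1 E GE).1.
    exact: le_trans h (lamG E GE).
  have -> : L = 0.
    rewrite /L /lamfam.
    have -> : Gn = set0 by apply/seteqP; split => E // GE; apply: G0; exists E.
    by rewrite image_set0 sup0.
  by [].
have Xp : 0 < X.
  rewrite /X ltr0n lt0n; apply/negP => /eqP h.
  move: hc; rewrite /X h mulr0 invr0 mulr0 => hc'; lra.
have key : (c * K * X) `^ ((a - 1) / a) < L.
  rewrite ltr_pdivlMr ?mulr_gt0 // in hc.
  have -> : L = (L `^ (a / (a - 1))) `^ ((a - 1) / a).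
    rewrite -powRrM (_ : a / (a - 1) * ((a - 1) / a) = 1) ?powRr1 //.
    field; apply/andP; split; rewrite gt_eqF //; lra.
  apply: gt0_ltr_powR => //; rewrite ?nnegrE ?powR_ge0 //.
  - by rewrite !mulr_ge0 // ltW.
  - by rewrite -mulrA.
have hb : ~ (c * X < #|H|%:R) -> lam k a H <= (c * K * X) `^ ((a - 1) / a).
  move=> /negP; rewrite -leNgt => hH.
  have [_ h _ _] := @lam_facts R n k a H k2 kn a1 uH.
  apply: le_trans h _; apply: ge0_ler_powR.
  - exact: ltW.
  - by rewrite nnegrE mulr_ge0.
  - by rewrite nnegrE !mulr_ge0 // ltW.
  - by rewrite -/K (mulrC c K) -mulrA ler_wpM2l // ltW.
have big : c * X < #|H|%:R -> exists2 G, Gn G & subhg H G.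
  by move=> h; exact: univ2.
split.
  have [h|h] := pselect (c * X < #|H|%:R).
    have [G GG sHG] := big h.
    apply: le_trans (lamG G GG).
    exact: (@lam_mono R n k a H G k2 kn a1 uH (univ1 G GG).1 sHG).
  exact: le_trans (hb h) (ltW key).
move=> hl; have [h|h] := pselect (c * X < #|H|%:R); first exact: big.
have := lt_le_trans hl (hb h); by rewrite ltxx.
Qed.
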